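(* Let $\alpha>0$ and $\hbar>0$ be constants, and let $\tilde g:\mathbb{R}\setminus\{0\}\to\mathbb{R}$ be a continuously differentiable function. Let $\psi\in L^{2}(\mathbb{R},dp)$ be a nonzero function that is continuously differentiable on $\mathbb{R}\setminus\{0\}$. For $\tau\in\mathbb{R}$ define $$\mathcal{A}_\psi(\tau)=4\pi\int_{\mathbb{R}}dp\,\left|\left(\frac{d\tilde g(p)}{dp}+\frac{\alpha^{2}}{p^{2}}\tau\right)\psi(p)-i\hbar\,\frac{d\psi(p)}{dp}\right|^{2}\in[0,\infty].$$ Then for every $\tau\in\mathbb{R}$ one has $\mathcal{A}_\psi(\tau)>0$; that is, there is no nonzero square-integrable $\psi$ and no $\tau_0\in\mathbb{R}$ with $\mathcal{A}_\psi(\tau_0)=0$.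
   Context: $\mathcal{A}_\psi(\tau)$ is the expectation value, in the physical state with reduced amplitude $\psi(p_a)$, of the gauge-invariant relational observable associated with the area $4\pi a^2$ of 2-spheres in the Schwarzschild interior, at relational clock time $\tau$; here $p=p_a$ and $\tilde g(p)=-\hbar\,g(-\alpha^2/p)$ where $g$ is the phase function specifying the choice of clock. *)

(* Defs.v *)
From HB Require Import structures.
From mathcomp Require Import all_boot all_order all_algebra.
From mathcomp Require Import all_classical all_reals all_analysis.
Set Implicit Arguments. Unset Strict Implicit. Unset Printing Implicit Defensive.
Import Order.TTheory GRing.Theory Num.Theory.
Import numFieldNormedType.Exports.
Local Open Scope classical_set_scope.
Local Open Scope ring_scope.

(* The complex wave function psi = u + i v is given by its real part u and
   imaginary part v.  For a(p) = g~'(p) + alpha^2 tau / p^2 we have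
   | a psi - i hbar psi' |^2 = (a u + hbar v')^2 + (a v - hbar u')^2. *)
Definition Aintegrand {R : realType} (alpha hbar : R) (gt u v : R -> R)
  (tau p : R) : R :=
  let a := derive1 gt p + alpha ^+ 2 / p ^+ 2 * tau in
  (a * u p + hbar * derive1 v p) ^+ 2 + (a * v p - hbar * derive1 u p) ^+ 2.

Definition Apsi {R : realType} (alpha hbar : R) (gt u v : R -> R) (tau : R)
  : \bar R :=
  ((4 * pi)%:E * \int[@lebesgue_measure R]_(p in setT)
      (Aintegrand alpha hbar gt u v tau p)%:E)%E.

(* Main.v *)
Require Import Defs.
From HB Require Import structures.
From mathcomp Require Import all_boot all_order all_algebra.
From mathcomp Require Import all_classical all_reals all_analysis.
From mathcomp Require Import ring lra.
Import Order.TTheory GRing.Theory Num.Theory.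
Import numFieldNormedType.Exports.
Local Open Scope classical_set_scope.
Local Open Scope ring_scope.

Lemma cont_A (R : realType) (alpha hbar : R) (gt u v : R -> R) tau p :
  p != 0 ->
  derivable u p 1 -> derivable v p 1 ->
  {for p, continuous (derive1 gt)} ->
  {for p, continuous (derive1 u)} -> {for p, continuous (derive1 v)} ->
  {for p, continuous (Aintegrand alpha hbar gt u v tau)}.
Proof.
move=> p0 du dv cg cu' cv'.
have cu : {for p, continuous u}.
  by apply: differentiable_continuous; rewrite -derivable1_diffP.
have cv : {for p, continuous v}.
  by apply: differentiable_continuous; rewrite -derivable1_diffP.
have cx2 : {for p, continuous (fun x : R => x ^+ 2)} by exact: exprn_continuous.
have cinv : {for p, continuous (fun x : R => (x ^+ 2)^-1)}.
  by apply: continuousV => //; rewrite expf_neq0.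
have ca : {for p, continuous (fun x => derive1 gt x + alpha ^+ 2 / x ^+ 2 * tau)}.
  apply: continuousD => //.
  apply: continuousM; last exact: cst_continuous.
  apply: continuousM => //; exact: cst_continuous.
rewrite /Aintegrand.
apply: continuousD; apply: continuousM.
- apply: continuousD; apply: continuousM => //; exact: cst_continuous.
- apply: continuousD; apply: continuousM => //; exact: cst_continuous.
- apply: continuousB; apply: continuousM => //; exact: cst_continuous.
- apply: continuousB; apply: continuousM => //; exact: cst_continuous.
Qed.

Lemma meas_of_cont (R : realType) (f : R -> R) :
  (forall p, p != 0 -> {for p, continuous f}) -> measurable_fun setT f.
Proof.
move=> cf.
have -> : [set: R] = ~` [set 0] `|` [set 0] by rewrite setUC setUv.
have o : open (~` [set (0:R)]).
  apply: closed_openC; apply: compact_closed; [exact: Rhausdorff | exact: compact_set1].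
apply/measurable_funU => //; first exact: measurable_realfun.open_measurable.
split; last exact: measurable_fun_set1.
apply: measurable_realfun.open_continuous_measurable_fun => // x; rewrite inE /= => x0.
by apply: cf; apply/eqP.
Qed.

Lemma int_pos (R : realType) (f : R -> R) p1 :
  measurable_fun setT f -> (forall x, 0 <= f x) -> {for p1, continuous f} ->
  0 < f p1 -> (0 < \int[@lebesgue_measure R]_(p in setT) (f p)%:E)%E.
Proof.
move=> mf f0 cf fp1.
have hz : f p1 / 2 < f p1 by lra.
have := @cvgr_gt _ _ _ _ f (f p1) cf _ hz.
move=> H; have [e /= e0 He] := (nbhs_ballP _ _).1 (H _).
apply: (@lt_le_trans _ _ (\int[@lebesgue_measure R]_(p in `](p1 - e)%R, (p1 + e)%R[) ((f p1/2)%R%:E))%E).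
  rewrite integral_cst //= lebesgue_measure_itv /=.
  rewrite ifT; last by rewrite lte_fin; lra.
  rewrite -EFinB; apply: mule_gt0; rewrite lte_fin; lra.
apply: (@le_trans _ _ (\int[@lebesgue_measure R]_(p in `](p1 - e)%R, (p1 + e)%R[) (f p)%:E)%E).
  apply: ge0_le_integral => //.
  - by move=> x _; rewrite lee_fin; lra.
  - by apply/measurable_realfun.measurable_EFinP; apply: measurable_funS mf.
  - move=> x xin; rewrite lee_fin; apply/ltW; apply: He.
    by rewrite ball_itv.
apply: ge0_subset_integral => //.
- by apply/measurable_realfun.measurable_EFinP.
- by move=> x _; rewrite lee_fin.
Qed.

Lemma const_h (R : realType) (u v : R -> R) :
  (forall p : R, p != 0 -> derivable u p 1) ->
  (forall p : R, p != 0 -> derivable v p 1) ->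
  (forall p : R, p != 0 -> u p * derive1 u p + v p * derive1 v p = 0) ->
  forall a b, a < b -> (forall x, a <= x <= b -> x != 0) ->
  u a ^+ 2 + v a ^+ 2 = u b ^+ 2 + v b ^+ 2.
Proof.
move=> du dv h0 a b ab nz.
suff : (u * u + v * v) a = (u * u + v * v) b by rewrite /= -!expr2.
have hd : forall x : R, x != 0 -> is_derive x (1:R) (u * u + v * v) (0:R).
  move=> x x0.
  have Hu := derivableP (du x x0); have Hv := derivableP (dv x x0).
  apply: is_derive_eq (is_deriveD (is_deriveM Hu Hu) (is_deriveM Hv Hv)) _.
  have := h0 x x0; rewrite !derive1E => e.
  rewrite /GRing.scale /=. lra.
have hd' : forall x, x \in `]a, b[ -> is_derive x (1:R) (u * u + v * v) ((fun=> (0:R)) x).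
  move=> x; rewrite in_itv /= => /andP [? ?]; apply: hd; apply: nz.
  by apply/andP; split; apply: ltW.
have hc : {within `[a, b], continuous (u * u + v * v)}.
  apply: derivable_within_continuous => x; rewrite in_itv /= => xin.
  by case: (hd x (nz x xin)).
have [c _] := MVT ab hd' hc.
by rewrite mul0r => /eqP; rewrite subr_eq0 => /eqP.
Qed.

Lemma inf_int (R : realType) (h : R -> R) (S : set R) (C : R) :
  measurable_fun setT h -> (forall x, 0 <= h x) -> measurable S ->
  lebesgue_measure S = +oo%E -> (forall x, S x -> h x = C) -> 0 < C ->
  (\int[@lebesgue_measure R]_(p in setT) (h p)%:E = +oo)%E.
Proof.
move=> mh h0 mS Sy hC C0.
apply/eqP; rewrite -leye_eq.
have -> : (+oo = \int[@lebesgue_measure R]_(p in S) (cst C%:E) p)%E.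
  rewrite integral_cst //; set M := (X in (_ * X)%E); have -> : M = +oo%E by exact: Sy.
  by rewrite gt0_muley // lte_fin.
apply: (@le_trans _ _ (\int[@lebesgue_measure R]_(p in S) (h p)%:E)%E).
  apply: ge0_le_integral => //.
  - by move=> x _; rewrite lee_fin ltW.
  - by apply/measurable_realfun.measurable_EFinP; apply: measurable_funS mh.
  - by move=> x Sx; rewrite hC.
apply: ge0_subset_integral => //.
- by apply/measurable_realfun.measurable_EFinP.
- by move=> x _; rewrite lee_fin.
Qed.

Theorem mainTheorem1 (R : realType) (alpha hbar : R) (gt u v : R -> R)
  (halpha : 0 < alpha) (hhbar : 0 < hbar)
  (* g~ is C^1 on R \ {0} *)
  (hg_der : forall p : R, p != 0 -> derivable gt p 1)
  (hg_cont : forall p : R, p != 0 -> {for p, continuous (derive1 gt)})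
  (* psi = u + i v is C^1 on R \ {0} *)
  (hu_der : forall p : R, p != 0 -> derivable u p 1)
  (hu_cont : forall p : R, p != 0 -> {for p, continuous (derive1 u)})
  (hv_der : forall p : R, p != 0 -> derivable v p 1)
  (hv_cont : forall p : R, p != 0 -> {for p, continuous (derive1 v)})
  (* psi is in L^2(R, dp) *)
  (hu_meas : measurable_fun setT u) (hv_meas : measurable_fun setT v)
  (hL2 : (\int[@lebesgue_measure R]_(p in setT) ((u p) ^+ 2 + (v p) ^+ 2)%:E
           < +oo)%E)
  (* psi is nonzero as an element of L^2 (not almost everywhere zero) *)
  (hnz : ~ {ae @lebesgue_measure R, forall p, u p = 0 /\ v p = 0}) :
  forall tau : R, (0 < Apsi alpha hbar gt u v tau)%E.
Proof.
move=> tau.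
set f := Aintegrand alpha hbar gt u v tau.
have f0 : forall x, 0 <= f x.
  by move=> x; rewrite /f /Aintegrand addr_ge0 // sqr_ge0.
have cf : forall p, p != 0 -> {for p, continuous f}.
  by move=> p p0; apply: cont_A => //; [exact: hu_der|exact: hv_der|exact: hg_cont|exact: hu_cont|exact: hv_cont].
have mf := @meas_of_cont R f cf.
rewrite /Apsi; apply: mule_gt0; first by rewrite lte_fin mulr_gt0 // pi_gt0.
have [[p1 [p10 fp1]] | nop] := pselect (exists p1, p1 != 0 /\ 0 < f p1).
  exact: int_pos (cf _ p10) fp1.
exfalso; apply: hnz.
have fz : forall p, p != 0 -> f p = 0.
  move=> p p0; have := f0 p; rewrite le_eqVlt => /orP [/eqP -> //|fp].
  by exfalso; apply: nop; exists p.
have key : forall p, p != 0 -> u p * derive1 u p + v p * derive1 v p = 0.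
  move=> p p0; have := fz p p0; rewrite /f /Aintegrand.
  set a := (derive1 gt p + _).
  move=> /eqP; rewrite paddr_eq0 ?sqr_ge0 // !sqrf_eq0 => /andP [/eqP e1 /eqP e2].
  have E : hbar * (u p * derive1 u p + v p * derive1 v p) =
     u p * (a * v p - (a * v p - hbar * derive1 u p)) +
     v p * ((a * u p + hbar * derive1 v p) - a * u p) by ring.
  rewrite e1 e2 in E.
  have : hbar * (u p * derive1 u p + v p * derive1 v p) = 0 by rewrite E; ring.
  by move/eqP; rewrite mulf_eq0 gt_eqF //= => /eqP.
have hconst := @const_h R u v hu_der hv_der key.
set h := fun p => u p ^+ 2 + v p ^+ 2.
have h0 : forall x, 0 <= h x by move=> x; rewrite /h addr_ge0 // sqr_ge0.
have mh : measurable_fun setT h.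
  by apply: measurable_realfun.measurable_funD; apply: measurable_realfun.measurable_funX.
have hfin : (\int[@lebesgue_measure R]_(p in setT) (h p)%:E != +oo)%E.
  by rewrite lt_eqF.
have hz : forall p, p != 0 -> h p = 0.
  move=> p p0; have [//|hp] := eqVneq (h p) 0; exfalso.
  have hpos : 0 < h p by rewrite lt_def hp h0.
  apply/negP: hfin; apply/negPn/eqP.
  have [pneg|ppos] := ltP p 0.
  - apply: (@inf_int R h `]-oo, 0[%classic (h p)) => //.
    + by rewrite lebesgue_measure_itv /= ltNye.
    + move=> x; rewrite /= in_itv /= => x0.
      have [xp|px|->] := ltgtP x p.
      * apply: hconst => // y /andP [xy yp]; rewrite lt_eqF //.
        exact: le_lt_trans yp pneg.
      * apply/esym; apply: hconst => // y /andP [xy yp]; rewrite lt_eqF //.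
        exact: le_lt_trans yp x0.
      * by [].
  - have p0' : 0 < p by rewrite lt_def p0.
    apply: (@inf_int R h `]0, +oo[%classic (h p)) => //.
    + by rewrite lebesgue_measure_itv /= ltry.
    + move=> x; rewrite /= in_itv /= andbT => x0.
      have [xp|px|->] := ltgtP x p.
      * apply: hconst => // y /andP [xy yp]; rewrite gt_eqF //.
        exact: lt_le_trans xy.
      * apply/esym; apply: hconst => // y /andP [xy yp]; rewrite gt_eqF //.
        exact: lt_le_trans xy.
      * by [].
have N0 : (@lebesgue_measure R).-negligible [set 0].
  by apply/negligibleP => //; exact: lebesgue_measure_set1.
apply: negligibleS N0 => x /= nx.
have [//|x0] := eqVneq x 0; exfalso; apply: nx.
have := hz x x0; rewrite /h => /eqP; rewrite paddr_eq0 ?sqr_ge0 // !sqrf_eq0.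
by move=> /andP [/eqP -> /eqP ->].
Qed.
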